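(* Let $G$ be a connected unicyclic graph with largest vertex degree $\Delta\ge3$ and let $\alpha\in[0,1)$. If $\Delta\ge4$, or $\Delta=3$ and $k(G)\ge4$, then \[ \rho(A_\alpha(G))<\alpha\Delta+2(1-\alpha)\sqrt{\Delta-1}\cos\frac{\pi}{2k(G)+1}. \]
   Context: $A_\alpha(G)=\alpha D(G)+(1-\alpha)A(G)$ ($D$ degree matrix, $A$ adjacency matrix), and $\rho(M)$ is the spectral radius of $M$. A unicyclic graph is a connected graph with exactly one cycle. If $C_r$ is the unique cycle of $G$ with vertices $v_1,\dots,v_r$, removing the edges of $C_r$ leaves a forest of $r$ trees $T_1,\dots,T_r$ rooted at $v_1,\dots,v_r$; the height $h(T_i)$ is the largest distance from $v_i$ to a vertex of $T_i$, and the height of $G$ is $k(G)=\max_{1\le i\le r}h(T_i)+1$. *)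

(* Defs.v *)
From mathcomp Require Import all_boot.
From Stdlib Require Import Reals.
Set Implicit Arguments. Unset Strict Implicit. Unset Printing Implicit Defensive.

Section Graphs.
Variable V : finType.
Variable e : rel V.

Definition simple_graph : Prop := irreflexive e /\ symmetric e.

Definition connected : Prop := forall x y : V, connect e x y.

Definition is_cycle (c : seq V) : bool := [&& uniq c, 2 < size c & cycle e c].

Definition cyc_edge (c : seq V) (x y : V) : bool :=
  ((x \in c) && (next c x == y)) || ((y \in c) && (next c y == x)).

(* connected with exactly one cycle (cycles identified by their edge sets) *)
Definition unicyclic : Prop :=
  connected /\ exists c, is_cycle c /\
    forall c', is_cycle c' -> forall x y, cyc_edge c' x y = cyc_edge c x y.

Definition deg (v : V) : nat := #|[pred u | e v u]|.
Definition max_deg : nat := \max_(v : V) deg v.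

(* graph distance w.r.t. a relation r (number of edges of a shortest walk) *)
Definition walk_len (r : rel V) (x y : V) (n : nat) : bool :=
  [exists p : n.-tuple V, path r x p && (last x p == y)].
Definition dist (r : rel V) (x y : V) : nat :=
  find (walk_len r x y) (iota 0 #|V|).

Definition forest_rel (c : seq V) : rel V := fun x y => e x y && ~~ cyc_edge c x y.

Definition tree_height (c : seq V) (v : V) : nat :=
  \max_(u | connect (forest_rel c) v u) dist (forest_rel c) v u.

(* k(G) = max_i h(T_i) + 1 *)
Definition height (c : seq V) : nat := (\max_(v | v \in c) tree_height c v).+1.

Local Open Scope R_scope.

Definition A_alpha (alpha : R) (u v : V) : R :=
  (if u == v then alpha * INR (deg u) else 0) +
  (1 - alpha) * (if e u v then 1 else 0).

Definition mxv (M : V -> V -> R) (x : V -> R) (u : V) : R :=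
  \big[Rplus/0]_(v : V) (M u v * x v).

(* a + i b is a (complex) eigenvalue of M, with eigenvector x + i y <> 0 *)
Definition is_eigenvalue (M : V -> V -> R) (a b : R) : Prop :=
  exists x y : V -> R, (exists v, x v <> 0 \/ y v <> 0) /\
    forall u, mxv M x u = a * x u - b * y u /\ mxv M y u = b * x u + a * y u.

(* rho(M) < r : every eigenvalue has modulus < r (the spectrum is finite,
   so this is exactly the statement that the spectral radius is < r) *)
Definition spectral_radius_lt (M : V -> V -> R) (r : R) : Prop :=
  forall a b, is_eigenvalue M a b -> sqrt (a * a + b * b) < r.

End Graphs.

(* Main.v *)
Require Import Defs.
From Stdlib Require Import Reals Lra Lia Psatz.
Module TrigM.
Local Open Scope R_scope.
Lemma INRf (n : nat) (z : Z) : Z.of_nat n = z -> INR n = IZR z.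
Proof. intros <-; apply INR_IZR_INZ. Qed.
Lemma PI_lt : PI <= 16/5.
Proof.
  destruct (Rlt_le_dec (8/5) (PI/2)) as [H|H].
  2: lra.
  exfalso.
  assert (h1 := cos_gt_0 (8/5) ltac:(lra) H).
  assert (h2 := proj2 (cos_bound (8/5) 1 ltac:(lra) ltac:(lra))).
  unfold cos_approx, cos_term in h2. cbn [sum_f_R0 Nat.mul Nat.add] in h2.
  rewrite (INRf (Factorial.fact 0) 1) in h2 by reflexivity.
  rewrite (INRf (Factorial.fact 2) 2) in h2 by reflexivity.
  rewrite (INRf (Factorial.fact 4) 24) in h2 by reflexivity.
  rewrite (INRf (Factorial.fact 6) 720) in h2 by reflexivity.
  rewrite (INRf (Factorial.fact 8) 40320) in h2 by (vm_compute; reflexivity).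
  simpl pow in h2. lra.
Qed.

Section Trig.
Variables (Dl k : nat).
Definition sq := sqrt (INR Dl - 1).
Definition th := PI / (2 * INR k + 1).
Definition ph := th / 2.
Definition hh (d : nat) := cos ((2 * INR d + 1) * ph).
Definition gg (d : nat) := hh d * (/ sq) ^ d.

Hypothesis HD : (3 <= Dl)%nat.
Hypothesis Hk : (1 <= k)%nat.

Lemma sq_sq : sq * sq = INR Dl - 1.
Proof.
  unfold sq. apply sqrt_sqrt. assert (H := le_INR _ _ HD). simpl in H. lra.
Qed.

Lemma sq_pos : 1 < sq.
Proof.
  assert (H := le_INR _ _ HD). simpl in H. assert (h := sq_sq).
  assert (0 <= sq) by (unfold sq; apply sqrt_pos). nra.
Qed.

Lemma k_pos : 1 <= INR k.
Proof. apply (le_INR 1). exact Hk. Qed.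

Lemma ph_pos : 0 < ph.
Proof.
  unfold ph, th. assert (h := k_pos). assert (h2 := PI_RGT_0).
  apply Rmult_lt_0_compat; [|lra]. apply Rdiv_lt_0_compat; lra.
Qed.

Lemma ph_k : (2 * INR k + 1) * ph = PI / 2.
Proof. unfold ph, th. assert (h := k_pos). field. lra. Qed.

Lemma hh_rec d : hh d + hh (S (S d)) = 2 * cos th * hh (S d).
Proof.
  unfold hh. rewrite !S_INR.
  replace ((2 * INR d + 1) * ph) with ((2 * (INR d + 1) + 1) * ph - th) by (unfold ph; field).
  replace ((2 * (INR d + 1 + 1) + 1) * ph) with ((2 * (INR d + 1) + 1) * ph + th) by (unfold ph; field).
  rewrite cos_minus, cos_plus. ring.
Qed.

Lemma hh_rec0 : hh 0 + hh 1 = 2 * cos th * hh 0.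
Proof.
  unfold hh. simpl INR.
  replace ((2 * 1 + 1) * ph) with (th + ph) by (unfold ph; field).
  replace ((2 * 0 + 1) * ph) with ph by ring.
  assert (E : cos (th - ph) = cos ph) by (f_equal; unfold ph; field).
  rewrite <- E at 1.
  rewrite cos_minus, cos_plus. ring.
Qed.

Lemma gg_rec d : gg d + (INR Dl - 1) * gg (S (S d)) = 2 * sq * cos th * gg (S d).
Proof.
  unfold gg. rewrite <- sq_sq.
  assert (E := hh_rec d).
  replace (hh d) with (2 * cos th * hh (S d) - hh (S (S d))) by lra.
  assert (h := sq_pos). simpl pow. field. lra.
Qed.

Lemma hh_pos d : (d < k)%nat -> 0 < hh d.
Proof.
  intro H. unfold hh. assert (h1 := ph_pos). assert (h2 := ph_k).
  assert (h3 : INR d + 1 <= INR k) by (rewrite <- S_INR; apply le_INR; lia).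
  assert (h4 := pos_INR d).
  apply cos_gt_0; nra.
Qed.

Lemma hh_nonneg d : (d <= k)%nat -> 0 <= hh d.
Proof.
  intro H. unfold hh. assert (h1 := ph_pos). assert (h2 := ph_k).
  assert (h3 : INR d <= INR k) by (apply le_INR; lia).
  assert (h4 := pos_INR d).
  apply cos_ge_0; nra.
Qed.

Lemma hh_mono n m : (n <= m)%nat -> (m <= k)%nat -> hh m <= hh n.
Proof.
  intros H1 H2. destruct (Nat.eq_dec n m) as [->|Hne]; [lra|].
  unfold hh. assert (h1 := ph_pos). assert (h2 := ph_k).
  assert (h3 : INR n + 1 <= INR m) by (rewrite <- S_INR; apply le_INR; lia).
  assert (h3' : INR m <= INR k) by (apply le_INR; lia).
  assert (h4 := pos_INR n). assert (h5 := PI_RGT_0).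
  left. apply cos_decreasing_1; nra.
Qed.

Lemma q_pos : 0 < / sq.
Proof. assert (h := sq_pos). apply Rinv_0_lt_compat. lra. Qed.

Lemma q_le1 : / sq <= 1.
Proof. assert (h := sq_pos). rewrite <- Rinv_1. apply Rinv_le_contravar; lra. Qed.

Lemma qpow_mono n m : (n <= m)%nat -> (/ sq) ^ m <= (/ sq) ^ n.
Proof.
  intro H. induction H. lra.
  simpl. assert (h := q_le1). assert (h2 := q_pos).
  assert (0 < (/sq) ^ m) by (apply pow_lt; lra). nra.
Qed.

Lemma gg_pos d : (d < k)%nat -> 0 < gg d.
Proof.
  intro H. unfold gg. apply Rmult_lt_0_compat. now apply hh_pos.
  apply pow_lt, q_pos.
Qed.

Lemma gg_nonneg d : (d <= k)%nat -> 0 <= gg d.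
Proof.
  intro H. unfold gg. apply Rmult_le_pos. now apply hh_nonneg.
  left; apply pow_lt, q_pos.
Qed.

Lemma gg_mono n m : (n <= m)%nat -> (m <= k)%nat -> gg m <= gg n.
Proof.
  intros H1 H2. unfold gg.
  assert (a := hh_mono n m H1 H2). assert (b := hh_nonneg m H2).
  assert (c := qpow_mono n m H1). assert (d := pow_lt _ m q_pos).
  assert (e := hh_nonneg n ltac:(lia)).
  nra.
Qed.

Lemma cos_lb x : 0 <= x -> x <= PI/2 -> 1 - x*x/2 <= cos x.
Proof.
  intros H1 H2. assert (h := proj1 (cos_bound x 0 ltac:(lra) H2)).
  unfold cos_approx, cos_term in h. cbn [sum_f_R0 Nat.mul Nat.add] in h.
  rewrite (INRf (Factorial.fact 0) 1) in h by reflexivity.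
  rewrite (INRf (Factorial.fact 2) 2) in h by reflexivity.
  simpl pow in h. lra.
Qed.

Lemma gg_root (H : (4 <= Dl)%nat \/ (Dl = 3%nat /\ (4 <= k)%nat)) (Hk2 : (2 <= k)%nat) :
  2 * gg 0 + (INR Dl - 2) * gg 1 < 2 * sq * cos th * gg 0.
Proof.
  assert (E := hh_rec0). unfold gg. simpl pow.
  replace (hh 1) with (2 * cos th * hh 0 - hh 0) by lra.
  assert (h0 := hh_pos 0 ltac:(lia)).
  assert (s1 := sq_pos). assert (s2 := sq_sq).
  assert (Pi := PI_lt). assert (Pi0 := PI_RGT_0).
  set (C := cos th). set (s := sq) in *.
  assert (Hk' : 2 <= INR k) by (apply (le_INR 2); lia).
  assert (thp : 0 < th) by (unfold th; apply Rdiv_lt_0_compat; lra).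
  assert (thle : th <= PI / 5).
  { unfold th. apply Rmult_le_compat_l; [lra|]. apply Rinv_le_contravar; lra. }
  assert (HC := cos_lb th ltac:(lra) ltac:(lra)). fold C in HC.
  assert (key : 2 * s - s * s + 1 < 2 * C).
  { destruct H as [H|[H1 H2]].
    - assert (HD4 := le_INR _ _ H). simpl in HD4.
      destruct (Nat.eq_dec Dl 4) as [E4|Hne].
      + rewrite E4 in s2. simpl in s2. assert (s <= 17321/10000) by nra. nra.
      + assert (HD5 : INR 5 <= INR Dl) by (apply le_INR; lia). simpl in HD5.
        assert (2 <= s) by nra. nra.
    - rewrite H1 in s2. simpl in s2.
      assert (Hk4 : INR 4 <= INR k) by (apply le_INR; lia). simpl in Hk4.
      assert (thle9 : th <= PI / 9).
      { unfold th. apply Rmult_le_compat_l; [lra|]. apply Rinv_le_contravar; lra. }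
      assert (s <= 14143/10000) by nra. nra. }
  assert (EE : INR Dl - 2 = s * s - 1) by lra. rewrite EE.
  apply Rmult_lt_reg_r with (r := s); [lra|].
  replace ((2 * (hh 0 * 1) + (s * s - 1) * ((2 * C * hh 0 - hh 0) * (/ s * 1))) * s)
    with (hh 0 * (2 * s + (s*s - 1) * (2 * C - 1))) by (field; lra).
  replace (2 * s * C * (hh 0 * 1) * s) with (hh 0 * (2 * s * s * C)) by ring.
  apply Rmult_lt_compat_l; [lra|]. nra.
Qed.

End Trig.
End TrigM.
Import TrigM.
From HB Require Import structures.
From mathcomp Require Import all_boot zify_ssreflect.
From Stdlib Require Import Reals.
Set Implicit Arguments. Unset Strict Implicit. Unset Printing Implicit Defensive.

Section Comb.
Variables (V : finType) (e : rel V) (c : seq V).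
Hypothesis Hsimp : simple_graph e.
Hypothesis Huni : unicyclic e.
Hypothesis Hc : is_cycle e c.

Lemma e_sym : symmetric e. Proof. by case: Hsimp. Qed.
Lemma eirr x : e x x = false. Proof. by case: Hsimp => H _; apply: H. Qed.

Lemma c_uniq : uniq c. Proof. by case/and3P: Hc. Qed.
Lemma c_size : 2 < size c. Proof. by case/and3P: Hc. Qed.
Lemma c_cycle : cycle e c. Proof. by case/and3P: Hc. Qed.

Definition rm (x y : V) : rel V :=
  fun a b => e a b && ~~ (((a == x) && (b == y)) || ((a == y) && (b == x))).

Lemma rm_sym x y : symmetric (rm x y).
Proof.
move=> a b; rewrite /rm e_sym; congr (_ && ~~ _).
by rewrite orbC; congr (_ || _); rewrite andbC.
Qed.

Lemma rm_e x y a b : rm x y a b -> e a b. Proof. by case/andP. Qed.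

Lemma bridge x y : e x y -> ~~ cyc_edge c x y -> ~~ connect (rm x y) x y.
Proof.
move=> exy ncyc; apply/negP => /connectP [p pth lst].
move: lst; case/shortenP: pth => p' pth' uq _ lst.
have yx : y != x by apply/negP => /eqP yx; rewrite yx eirr in exy.
have sz : 2 < size (x :: p').
  case: p' pth' uq lst => [|z [|z' q]] //=.
    by move=> _ _ yx'; rewrite yx' eqxx in yx.
  by move=> /andP [rxz _] _ yz; rewrite -yz /rm exy !eqxx /= in rxz.
have cyc' : cycle e (x :: p').
  rewrite /= rcons_path -lst e_sym exy andbT.
  by apply: sub_path pth' => a b; apply: rm_e.
have ic' : is_cycle e (x :: p') by rewrite /is_cycle uq sz cyc'.
have ce' : cyc_edge (x :: p') x y.
  apply/orP; right; apply/andP; split.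
    by rewrite lst mem_last.
  have := cycle_next uq; rewrite /= rcons_path => /andP [_].
  by rewrite -lst.
case: Huni => _ [c0 [_ Hu]].
move: ncyc; rewrite (Hu c Hc) -(Hu _ ic').
by rewrite ce'.
Qed.


Lemma rm_csym x y a b : connect (rm x y) a b = connect (rm x y) b a.
Proof. exact: (sym_connect_sym (@rm_sym x y)). Qed.

Lemma cyc_conn x y : ~~ cyc_edge c x y ->
  forall a b, a \in c -> b \in c -> connect (rm x y) a b.
Proof.
move=> nc.
have step : forall a b, next c a == b -> connect (rm x y) a b.
  move=> a b /eqP <-; case ac: (a \in c); last by rewrite next_nth ac.
  apply: connect1; rewrite /rm next_cycle ?c_cycle //=.
  apply/negP => /orP [/andP [/eqP ax /eqP ny] | /andP [/eqP ay /eqP nx]];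
    apply: (negP nc); rewrite /cyc_edge.
    by rewrite -ax ac ny eqxx.
  by rewrite -ay ac nx eqxx orbT.
have hc : forall z, z \in c -> connect (rm x y) (head z c) z.
  move=> z; have := cycle_next c_uniq.
  case Ec: c => [|h t] //= hp zc.
  have hz : fconnect (next (h :: t)) h z.
    by apply: (path_connect hp); rewrite in_cons mem_rcons zc orbT.
  apply: (connect_sub _ hz) => u v /= /eqP <-; apply: step; by rewrite Ec.
move=> a b ac bc.
have ha := hc a ac; have hb := hc b bc.
have : head a c = head b c by case: (c) ac => [|h t].
move=> eh; rewrite eh in ha.
by apply: connect_trans hb; rewrite rm_csym.
Qed.


Lemma conn : connected e. Proof. by case: Huni. Qed.

Fixpoint reach (n : nat) : {set V} :=
  if n is n'.+1 then reach n' :|: [set v | [exists w in reach n', e v w]]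
  else [set v | v \in c].

Lemma reach_le n m : n <= m -> reach n \subset reach m.
Proof.
elim: m => [|m IH]; first by rewrite leqn0 => /eqP ->.
rewrite leq_eqVlt => /orP [/eqP -> //| /IH H].
by apply: subset_trans H _; rewrite /= subsetUl.
Qed.

Lemma reach_step n a b : a \in reach n -> e b a -> b \in reach n.+1.
Proof.
move=> ha eba; rewrite /= in_setU; apply/orP; right.
by rewrite inE; apply/existsP; exists a; rewrite ha eba.
Qed.

Lemma c_ne : exists c0, c0 \in c.
Proof. by move: c_size; case: (c) => [|h t] // _; exists h; rewrite inE eqxx. Qed.

Lemma reach_ex u : exists n, u \in reach n.
Proof.
case: c_ne => c0 c0c; move: (conn u c0) => /connectP [p pth E].
rewrite E in c0c => {E}.
elim: p u pth c0c => [|w p IH] u /=.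
  by move=> _ uc; exists 0; rewrite inE.
case/andP=> euw /IH H /H [n hn]; exists n.+1; exact: (reach_step hn).
Qed.

Definition D u := ex_minn (reach_ex u).

Lemma DP u : u \in reach (D u).
Proof. by rewrite /D; case: ex_minnP. Qed.

Lemma Dmin u n : u \in reach n -> D u <= n.
Proof. by rewrite /D; case: ex_minnP => m _ H /H. Qed.

Lemma D0 u : (D u == 0) = (u \in c).
Proof.
apply/idP/idP => [/eqP H | H]; first by have := DP u; rewrite H inE.
by rewrite -leqn0; apply: Dmin; rewrite inE.
Qed.

Lemma Dedge u w : e u w -> D u <= (D w).+1.
Proof. by move=> euw; apply: Dmin; apply: (reach_step (DP w)). Qed.

Lemma Dpar u : u \notin c -> exists w, e u w /\ (D w).+1 = D u.
Proof.
move=> nuc; have : D u != 0 by rewrite D0.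
have Hr := DP u; have Hmin := @Dmin u.
case E: (D u) Hr => [|m] //= Hr _; rewrite in_setU in Hr.
case/orP: Hr => [/Hmin|]; first by rewrite E ltnn.
rewrite inE => /existsP [w /andP [wr euw]].
exists w; split => //; apply/eqP; rewrite eqn_leq ltnS Dmin //=.
by have := Dedge euw; rewrite E ltnS.
Qed.


Lemma nc_off u w : u \notin c -> ~~ cyc_edge c u w && ~~ cyc_edge c w u.
Proof.
move=> nuc; rewrite /cyc_edge (negbTE nuc) /=.
apply/andP; split; apply/negP.
  by case/andP => wc /eqP E; move: nuc; rewrite -E mem_next wc.
by rewrite orbF => /andP [wc /eqP E]; move: nuc; rewrite -E mem_next wc.
Qed.

Lemma down u w1 n x : D x <= n -> D x <= D u -> x != u ->
  exists2 a, a \in c & connect (rm u w1) x a.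
Proof.
elim: n x => [|n IH] x.
  by rewrite leqn0 D0 => xc _ _; exists x.
move=> hn hu xu; case xc: (x \in c); first by exists x.
case: (Dpar (negbT xc)) => w [exw Dw].
have wu : w != u.
  by apply/negP => /eqP E; move: hu; rewrite -Dw E ltnn.
have h1 : D w <= n by rewrite -ltnS Dw.
have h2 : D w <= D u by apply: leq_trans hu; rewrite -Dw leqnSn.
have [a ac ha] := IH w h1 h2 wu.
exists a => //; apply: connect_trans ha; apply: connect1.
by rewrite /rm exw (negbTE xu) (negbTE wu) /= andbF.
Qed.

Lemma par_le1 u : u \notin c -> #|[pred v | e u v && (D v <= D u)]| <= 1.
Proof.
move=> nuc; rewrite leqNgt; apply/negP => /card_gt1P [w1 [w2 [h1 h2 neq]]].
rewrite !inE /= in h1 h2; case/andP: h1 => euw1 d1; case/andP: h2 => euw2 d2.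
have nc : ~~ cyc_edge c u w1 by case/andP: (nc_off w1 nuc).
apply: (negP (bridge euw1 nc)).
have uw1 : (u == w1) = false by apply/negP => /eqP E; rewrite E eirr in euw1.
have w2u : w2 != u by apply/negP => /eqP E; rewrite E eirr in euw2.
have w1u : w1 != u by rewrite eq_sym uw1.
have [a2 a2c h2] := down w1 (leqnn _) d2 w2u.
have [a1 a1c h1] := down w1 (leqnn _) d1 w1u.
apply: (@connect_trans _ _ w2).
  apply: connect1; rewrite /rm euw2 eqxx uw1 /=.
  by rewrite eq_sym (negbTE neq).
apply: (connect_trans h2); apply: (connect_trans (cyc_conn nc a2c a1c)).
by rewrite rm_csym.
Qed.

Lemma par_le2 u : u \in c -> #|[pred v | e u v && (D v <= D u)]| <= 2.
Proof.
move=> uc; have D0u : D u = 0 by apply/eqP; rewrite D0.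
apply: (@leq_trans #|[set next c u; prev c u]|); last first.
  by rewrite cards2; case: (_ != _).
apply: subset_leq_card; apply/subsetP => v; rewrite !inE /= D0u leqn0 D0.
case/andP => euv vc.
apply/negPn/negP; rewrite negb_or => /andP [n1 n2].
have nc : ~~ cyc_edge c u v.
  rewrite /cyc_edge eq_sym (negbTE n1) andbF /=; apply/negP => /andP [_ /eqP E].
  by move: n2; rewrite -E prev_next ?c_uniq // eqxx.
by apply: (negP (bridge euv nc)); apply: cyc_conn.
Qed.


Lemma forest_conn n u : D u <= n -> exists2 v, v \in c & connect (forest_rel e c) v u.
Proof.
elim: n u => [|n IH] u.
  by rewrite leqn0 D0 => uc; exists u.
move=> hn; case uc: (u \in c); first by exists u.
case: (Dpar (negbT uc)) => w [euw Dw].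
have hw : D w <= n by rewrite -ltnS Dw.
have [v vc hv] := IH w hw.
exists v => //; apply: (connect_trans hv); apply: connect1.
rewrite /forest_rel e_sym euw /=.
by case/andP: (nc_off w (negbT uc)).
Qed.

Lemma walk_reach p v m : v \in reach m -> path (forest_rel e c) v p ->
  last v p \in reach (m + size p).
Proof.
elim: p v m => [|w p IH] v m /=; first by rewrite addn0.
move=> hv /andP [/andP [evw _] hp].
rewrite addnS -addSn; apply: IH hp.
by apply: (reach_step hv); rewrite e_sym.
Qed.

Lemma D_dist v u : v \in c -> connect (forest_rel e c) v u ->
  D u <= Defs.dist (forest_rel e c) v u.
Proof.
move=> vc /connectP [p pth lst].
move: lst; case/shortenP: pth => p' pth' uq _ lst.
have hs : (size p').+1 <= #|V|.
  by have := max_card (mem (v :: p')); rewrite (card_uniqP uq).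
have H : has (walk_len (forest_rel e c) v u) (iota 0 #|V|).
  apply/hasP; exists (size p'); first by rewrite mem_iota.
  by apply/existsP; exists (in_tuple p'); rewrite /= pth' lst eqxx.
have := nth_find 0 H; rewrite has_find size_iota in H.
rewrite nth_iota // add0n -/(Defs.dist _ v u).
case/existsP => q /andP [hq /eqP hl].
have := walk_reach (m := 0) _ hq; rewrite hl size_tuple add0n.
have v0 : v \in reach 0 by rewrite inE.
by move/(_ v0); apply: Dmin.
Qed.

Lemma D_lt_height u : D u < height e c.
Proof.
have [v vc hv] := forest_conn (leqnn (D u)).
rewrite /height ltnS; apply: (leq_trans (D_dist vc hv)).
apply: (@leq_trans (tree_height e c v)); first exact: (leq_bigmax_cond u).
exact: (leq_bigmax_cond v).
Qed.

Lemma height_ge2 : 3 <= max_deg e -> 2 <= height e c.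
Proof.
move=> hm.
have [v hv] : exists v, 2 < deg e v.
  case: (pickP (fun v => 2 < deg e v)) => [v hv | none]; first by exists v.
  move: hm; rewrite leqNgt => /negP; case; rewrite ltnS.
  by apply/bigmax_leqP => i _; rewrite leqNgt none.
suff [w hw] : exists w, 0 < D w.
  by apply: leq_ltn_trans (D_lt_height w).
case vc: (v \in c); last by exists v; rewrite lt0n D0 vc.
case: (pickP [pred w | e v w && ~~ (D w <= D v)]) => [w /andP [_ hw] | none].
  by exists w; move: hw; rewrite -ltnNge; apply: leq_ltn_trans.
have := par_le2 vc; rewrite leqNgt => /negP; case.
apply: (leq_trans hv); apply: subset_leq_card; apply/subsetP => w.
rewrite !inE /=; move: (none w) => /= /negbT; rewrite negb_and negbK.
by case: (e v w).
Qed.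

End Comb.

HB.instance Definition _ := Monoid.isComLaw.Build R 0%R Rplus
  (fun x y z => esym (Rplus_assoc x y z)) Rplus_comm Rplus_0_l.

Section Sums.
Variable (V : finType).
Local Open Scope R_scope.

Lemma sumR_le (P : pred V) (F G : V -> R) :
  (forall v, P v -> F v <= G v) ->
  \big[Rplus/0]_(v | P v) F v <= \big[Rplus/0]_(v | P v) G v.
Proof.
move=> H; apply: (big_rec2 (fun a b => a <= b)); first lra.
move=> i a b Pi hab; have := H i Pi; lra.
Qed.

Lemma sumR_lt (P : pred V) (F G : V -> R) v0 :
  (forall v, P v -> F v <= G v) -> P v0 -> F v0 < G v0 ->
  \big[Rplus/0]_(v | P v) F v < \big[Rplus/0]_(v | P v) G v.
Proof.
move=> H P0 Hlt; rewrite (bigD1 v0 P0) [X in _ < X](bigD1 v0 P0) /=.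
apply: Rplus_lt_le_compat => //; apply: sumR_le => v /andP [Pv _]; exact: H.
Qed.

Lemma sumR_scale (P : pred V) (k : R) (F : V -> R) :
  \big[Rplus/0]_(v | P v) (k * F v) = k * \big[Rplus/0]_(v | P v) F v.
Proof.
apply: (big_rec2 (fun a b => a = k * b)); first ring.
by move=> i a b _ ->; ring.
Qed.

Lemma sumR_const (A : pred V) (k : R) :
  \big[Rplus/0]_(v | A v) k = INR #|A| * k.
Proof.
have -> : \big[Rplus/0]_(v | A v) k = \big[Rplus/0]_(v in A) k by [].
rewrite big_const; elim: #|A| => [|n IH] /=; first ring.
rewrite IH; case: n {IH} => [|n] /=; ring.
Qed.

End Sums.

Definition normR (x y : R) : R := sqrt (x * x + y * y).

Lemma sq2_nonneg x y : (0 <= x * x + y * y)%R.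
Proof. have := Rle_0_sqr x; have := Rle_0_sqr y; rewrite /Rsqr; lra. Qed.
Lemma sq1_nonneg x : (0 <= x * x)%R.
Proof. exact: Rle_0_sqr. Qed.

Lemma normR_ge0 x y : (0 <= normR x y)%R.
Proof. exact: sqrt_pos. Qed.

Lemma normR_sq x y : (normR x y * normR x y = x * x + y * y)%R.
Proof. apply: sqrt_sqrt; exact: sq2_nonneg. Qed.

Lemma normR_tri a b X Y : (normR (a + X) (b + Y) <= normR a b + normR X Y)%R.
Proof.
have h1 := normR_ge0 a b; have h2 := normR_ge0 X Y.
have s1 := normR_sq a b; have s2 := normR_sq X Y.
have cs : (a * X + b * Y <= normR a b * normR X Y)%R.
  have h3 := sq1_nonneg (a * Y - b * X).
  have h4 : (0 <= normR a b * normR X Y)%R by nra.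
  nra.
rewrite /normR -[X in (_ <= X)%R]sqrt_square; last by rewrite -/(normR a b) -/(normR X Y); lra.
apply: sqrt_le_1_alt; rewrite -/(normR a b) -/(normR X Y); nra.
Qed.

Lemma normR_scale k x y : (0 <= k)%R -> normR (k * x) (k * y) = (k * normR x y)%R.
Proof.
move=> hk; rewrite /normR.
have -> : (k * x * (k * x) + k * y * (k * y) = (k * k) * (x * x + y * y))%R by ring.
rewrite sqrt_mult; [|exact: sq1_nonneg|exact: sq2_nonneg]; by rewrite sqrt_square.
Qed.

Lemma normR_eig a b x y :
  normR (a * x - b * y) (b * x + a * y) = (sqrt (a * a + b * b) * normR x y)%R.
Proof.
rewrite /normR -sqrt_mult; [|exact: sq2_nonneg|exact: sq2_nonneg]; congr sqrt; ring.
Qed.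

Lemma normR_sum (V : finType) (w x y : V -> R) :
  (forall v, 0 <= w v)%R ->
  (normR (\big[Rplus/0%R]_(v : V) (w v * x v)) (\big[Rplus/0%R]_(v : V) (w v * y v))
   <= \big[Rplus/0%R]_(v : V) (w v * normR (x v) (y v)))%R.
Proof.
move=> hw; apply: (big_rec3 (fun a b z => normR a b <= z)%R).
  by rewrite /normR Rmult_0_l Rplus_0_l sqrt_0; lra.
move=> i a b z _ h.
apply: Rle_trans (normR_tri _ _ _ _) _.
rewrite normR_scale //; lra.
Qed.

Lemma argmaxR (T : finType) (F : T -> R) (t0 : T) :
  exists u0, forall u, (F u <= F u0)%R.
Proof.
suff [u0 H] : exists u0, forall u, u \in enum T -> (F u <= F u0)%R.
  by exists u0 => u; apply: H; rewrite mem_enum.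
elim: (enum T) => [|x s [u1 IH]]; first by exists t0.
case: (Rle_dec (F x) (F u1)) => h.
  by exists u1 => u; rewrite inE => /orP [/eqP ->|/IH].
exists x => u; rewrite inE => /orP [/eqP -> | /IH]; first lra.
lra.
Qed.

Section Main.
Variables (V : finType) (e : rel V) (c : seq V) (alpha : R).
Hypothesis Hsimp : simple_graph e.
Hypothesis Huni : unicyclic e.
Hypothesis Hc : is_cycle e c.
Hypothesis HD3 : 3 <= max_deg e.
Hypothesis Ha0 : (0 <= alpha)%R.
Hypothesis Ha1 : (alpha < 1)%R.
Hypothesis Hcase : 4 <= max_deg e \/ (max_deg e = 3 /\ 4 <= height e c).

Local Notation Dl := (max_deg e).
Local Notation kk := (height e c).
Local Notation DD := (D Huni Hc).

Lemma HDc : (3 <= Dl)%coq_nat. Proof. exact/leP. Qed.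
Lemma Hkc : (1 <= kk)%coq_nat. Proof. by apply/leP; rewrite /height. Qed.

Definition fv (u : V) : R := gg Dl kk (DD u).
Definition lam : R := (2 * sq Dl * cos (th kk))%R.
Definition rr : R := (alpha * INR Dl + (1 - alpha) * lam)%R.

Lemma DltK u : DD u < kk. Proof. exact: D_lt_height. Qed.

Lemma fv_pos u : (0 < fv u)%R.
Proof. apply: gg_pos; [exact: HDc | exact: Hkc | apply/ltP; exact: DltK]. Qed.

Lemma mxv_expand (F : V -> R) u :
  mxv (A_alpha e alpha) F u =
  (alpha * INR (deg e u) * F u + (1 - alpha) * \big[Rplus/0]_(v | e u v) F v)%R.
Proof.
rewrite /mxv /A_alpha.
under eq_bigr do rewrite Rmult_plus_distr_r.
rewrite big_split /=; congr (_ + _)%R.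
  rewrite (bigD1 u) //= eqxx big1 => [|v /negbTE vu]; first ring.
  by rewrite (eq_sym u v) vu; ring.
rewrite -sumR_scale [in RHS]big_mkcond /=; apply: eq_bigr => v _.
by case: (e u v); ring.
Qed.

Lemma Mf_le u :
  (mxv (A_alpha e alpha) fv u <= rr * fv u)%R /\
  (u \in c -> (mxv (A_alpha e alpha) fv u < rr * fv u)%R).
Proof.
rewrite mxv_expand.
have dk : DD u < kk := DltK u.
set d := DD u in dk *.
set G1 := gg Dl kk d.-1; set G2 := gg Dl kk d.+1.
have hG : (G2 <= G1)%R.
  by apply: gg_mono; [exact: HDc | exact: Hkc | apply/leP; lia | apply/leP; lia].
have hG2 : (0 <= G2)%R.
  by apply: gg_nonneg; [exact: HDc | exact: Hkc | apply/leP; lia].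
have pw : forall v, e u v -> (fv v <= G2 + (if (DD v <= d)%nat then G1 - G2 else 0))%R.
  move=> v euv; rewrite /fv; have dvk := DltK v.
  have hed := Dedge Huni Hc euv; rewrite -/d in hed.
  case: ifP => hv.
    have : (gg Dl kk (DD v) <= G1)%R.
      by apply: gg_mono; [exact: HDc | exact: Hkc | apply/leP; lia | apply/leP; lia].
    lra.
  have : (gg Dl kk (DD v) <= G2)%R.
    by apply: gg_mono; [exact: HDc | exact: Hkc | apply/leP; lia | apply/leP; lia].
  lra.
have S1 := sumR_le pw.
rewrite big_split /= -big_mkcondr in S1.
rewrite (sumR_const [pred v | e u v]) in S1.
rewrite (sumR_const [pred v | e u v && (DD v <= d)]) in S1.
have hdeg : (INR (deg e u) <= INR Dl)%R.
  by apply: le_INR; apply/leP; apply: (leq_bigmax u).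
have Edeg : deg e u = #|[pred v | e u v]| by [].
rewrite -Edeg in S1.
set np := #|[pred v | e u v && (DD v <= d)]| in S1.
set X := \big[Rplus/0%R]_(v | e u v) fv v in S1 *.
have fu := fv_pos u.
have A1 : (INR (deg e u) * G2 <= INR Dl * G2)%R by apply: Rmult_le_compat_r.
have A3 : (alpha * INR (deg e u) * fv u <= alpha * INR Dl * fv u)%R.
  by apply: Rmult_le_compat_r; [lra | apply: Rmult_le_compat_l].
have fin : forall Y, (X <= Y)%R -> (Y <= lam * fv u)%R ->
    (alpha * INR (deg e u) * fv u + (1 - alpha) * X <= rr * fv u)%R /\
    ((Y < lam * fv u)%R ->
     (alpha * INR (deg e u) * fv u + (1 - alpha) * X < rr * fv u)%R).
  move=> Y h1 h2; rewrite /rr.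
  have B : ((1 - alpha) * X <= (1 - alpha) * (lam * fv u))%R.
    by apply: Rmult_le_compat_l; lra.
  split; first by lra.
  move=> h3; have B' : ((1 - alpha) * X < (1 - alpha) * (lam * fv u))%R.
    by apply: Rmult_lt_compat_l; lra.
  lra.
case uc: (u \in c).
  have np2 : np <= 2 by apply: par_le2.
  have A2 : (INR np * (G1 - G2) <= 2 * (G1 - G2))%R.
    by apply: Rmult_le_compat_r; [lra | apply: (le_INR np 2); apply/leP].
  have d0 : d = 0 by apply/eqP; rewrite /d D0.
  have hk2 : (2 <= kk)%coq_nat by apply/leP; apply: height_ge2.
  have Hcase' : (4 <= Dl)%coq_nat \/ (Dl = 3 /\ (4 <= kk)%coq_nat).
    by case: Hcase => [h|[h1 h2]]; [left; apply/leP | right; split => //; apply/leP].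
  have R0 := gg_root Dl kk HDc Hkc Hcase' hk2.
  have eG1 : G1 = gg Dl kk 0 by rewrite /G1 d0.
  have eG2 : G2 = gg Dl kk 1 by rewrite /G2 d0.
  have efu : fv u = gg Dl kk 0 by rewrite /fv -/d d0.
  have L1 : (INR Dl * G2 + 2 * (G1 - G2) < lam * fv u)%R.
    by rewrite /lam efu eG1 eG2; lra.
  have [F1 F2] := fin (INR Dl * G2 + 2 * (G1 - G2))%R ltac:(lra) ltac:(lra).
  by split => // _; apply: F2.
have np1 : np <= 1 by apply: par_le1 => //; rewrite uc.
have A2 : (INR np * (G1 - G2) <= 1 * (G1 - G2))%R.
  by apply: Rmult_le_compat_r; [lra | apply: (le_INR np 1); apply/leP].
have [d' ed] : exists d', d = d'.+1.
  have dn0 : d != 0 by rewrite /d D0 uc.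
  by exists d.-1; rewrite prednK // lt0n.
have Rc := gg_rec Dl kk HDc d'.
have eG1 : G1 = gg Dl kk d' by rewrite /G1 ed.
have eG2 : G2 = gg Dl kk d'.+2 by rewrite /G2 ed.
have efu : fv u = gg Dl kk d'.+1 by rewrite /fv -/d ed.
have L1 : (INR Dl * G2 + 1 * (G1 - G2) <= lam * fv u)%R.
  by rewrite /lam efu eG1 eG2; lra.
have [F1 F2] := fin (INR Dl * G2 + 1 * (G1 - G2))%R ltac:(lra) L1.
by split.
Qed.

Lemma Mnn u v : (0 <= A_alpha e alpha u v)%R.
Proof.
rewrite /A_alpha; apply: Rplus_le_le_0_compat.
  case: (u == v); last lra.
  apply: Rmult_le_pos => //; exact: pos_INR.
apply: Rmult_le_pos; first lra.
case: (e u v); lra.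
Qed.

Lemma Muw u w : e u w -> A_alpha e alpha u w = (1 - alpha)%R.
Proof.
move=> euw; have uw : (u == w) = false.
  by apply/negP => /eqP E; rewrite E (eirr Hsimp) in euw.
by rewrite /A_alpha uw euw; ring.
Qed.

Theorem main_sec : spectral_radius_lt (A_alpha e alpha) rr.
Proof.
move=> a b [x [y [[v0 hv0] Heig]]].
set rho := sqrt (a * a + b * b).
pose m u := normR (x u) (y u).
have Hm : forall u, (rho * m u <= mxv (A_alpha e alpha) m u)%R.
  move=> u; case: (Heig u) => h1 h2.
  rewrite /m /rho -normR_eig -h1 -h2 /mxv; apply: normR_sum => v; exact: Mnn.
have [u0 Hu0] := argmaxR (fun u => m u / fv u)%R v0.
set T := (m u0 / fv u0)%R in Hu0.
have hT : forall u, (m u <= T * fv u)%R.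
  move=> u; have := Hu0 u; have := fv_pos u => fp h.
  have := Rmult_le_compat_r (fv u) _ _ (Rlt_le _ _ fp) h.
  by rewrite /Rdiv Rmult_assoc Rinv_l ?Rmult_1_r //; lra.
have mv0 : (0 < m v0)%R.
  apply: sqrt_lt_R0.
  case: hv0 => h; [have := sq1_nonneg (y v0) | have := sq1_nonneg (x v0)];
    move=> h'; [have : (0 < x v0 * x v0)%R | have : (0 < y v0 * y v0)%R];
    try (by apply: Rsqr_pos_lt); lra.
have Tpos : (0 < T)%R.
  apply: Rlt_le_trans (Hu0 v0); apply: Rdiv_lt_0_compat => //; exact: fv_pos.
case: (Rlt_le_dec rho rr) => // hge; exfalso.
have claim : forall u, m u = (T * fv u)%R ->
    u \notin c /\ forall w, e u w -> m w = (T * fv w)%R.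
  move=> u hu.
  have c1 := Hm u.
  have c2 : (mxv (A_alpha e alpha) m u <= T * mxv (A_alpha e alpha) fv u)%R.
    rewrite /mxv -sumR_scale; apply: sumR_le => v _.
    have := hT v; have := Mnn u v => h1 h2.
    have := Rmult_le_compat_l _ _ _ h1 h2; lra.
  have [c3 c3s] := Mf_le u.
  have fu := fv_pos u.
  have low : (rr * (T * fv u) <= rho * m u)%R.
    rewrite hu; apply: Rmult_le_compat_r => //; nra.
  have up : (T * mxv (A_alpha e alpha) fv u <= T * (rr * fv u))%R.
    by apply: Rmult_le_compat_l; lra.
  split.
    apply/negP => uc; have := c3s uc => h.
    have : (T * mxv (A_alpha e alpha) fv u < T * (rr * fv u))%R.
      by apply: Rmult_lt_compat_l.
    lra.
  move=> w euw; apply: Rle_antisym; first exact: hT.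
  apply: Rnot_lt_le => hlt.
  have c2' : (mxv (A_alpha e alpha) m u < T * mxv (A_alpha e alpha) fv u)%R.
    rewrite /mxv -sumR_scale; apply: (@sumR_lt _ _ _ _ w) => //.
      move=> v _; have := hT v; have := Mnn u v => h1 h2.
      have := Rmult_le_compat_l _ _ _ h1 h2; lra.
    rewrite Muw //.
    have : ((1 - alpha) * m w < (1 - alpha) * (T * fv w))%R.
      by apply: Rmult_lt_compat_l; lra.
    lra.
  lra.
have [c0 c0c] := c_ne Hc.
move: (conn Huni u0 c0) => /connectP [p pth lst].
have hu0 : m u0 = (T * fv u0)%R.
  rewrite /T /Rdiv Rmult_assoc Rinv_l ?Rmult_1_r //; have := fv_pos u0; lra.
have prop : forall q u, path e u q -> m u = (T * fv u)%R ->
    m (last u q) = (T * fv (last u q))%R.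
  elim => [|w q IH] u /=; first by [].
  case/andP => euw hp hu; apply: IH hp _.
  by case: (claim u hu) => _ /(_ w euw).
have := prop p u0 pth hu0.
by rewrite -lst => /claim [/negP].
Qed.

End Main.

Theorem mainTheorem10 (V : finType) (e : rel V) (c : seq V) (alpha : R) :
  simple_graph e -> unicyclic e -> is_cycle e c ->
  3 <= max_deg e ->
  (0 <= alpha)%R -> (alpha < 1)%R ->
  (4 <= max_deg e \/ (max_deg e = 3 /\ 4 <= height e c)) ->
  spectral_radius_lt (A_alpha e alpha)
    (alpha * INR (max_deg e)
     + 2 * (1 - alpha) * sqrt (INR (max_deg e) - 1)
       * cos (PI / (2 * INR (height e c) + 1)))%R.
Proof.
move=> Hs Hu Hc HD Ha0 Ha1 Hcase.
have -> : (alpha * INR (max_deg e)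
     + 2 * (1 - alpha) * sqrt (INR (max_deg e) - 1)
       * cos (PI / (2 * INR (height e c) + 1)))%R = rr e c alpha.
  by rewrite /rr /lam /sq /th; ring.
exact: main_sec.
Qed.
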